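(* Let $r>1$ be an integer and let $\sigma$ be a morphism on the alphabet $\{0,\dots,r-1\}$ which is non-erasing, i.e. $|\sigma(i)|\ge 1$ for all $i\in\{0,\dots,r-1\}$. Let $L=(|\sigma(0)|,\dots,|\sigma(r-1)|)$ be its length vector and $M$ its incidence matrix. Let $x$ be a one-sided infinite fixed point of $\sigma$. If $L$ is a left eigenvector of $M$ (i.e. $LM=\lambda L$ for some real $\lambda$), then $x$ is $q$-automatic, where $q$ is the spectral radius of $M$ (in particular $q$ is an integer).
   Context: A morphism $\sigma$ on a finite alphabet $\mathcal A$ extends to finite and infinite words by concatenation. Its incidence matrix $M$ is the $|\mathcal A|\times|\mathcal A|$ matrix with $M_{i,j}$ equal to the number of occurrences of the letter $i$ in $\sigma(j)$ (so column sums are the lengths $|\sigma(j)|$). A morphism is $q$-uniform if all images of letters have length $q$. For an integer $q\ge 2$, a sequence is $q$-automatic if it is the image under a letter-to-letter map of a fixed point of a $q$-uniform morphism. *)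

(* Defs.v *)
From HB Require Import structures.
From mathcomp Require Import all_boot all_order all_algebra all_field.
Set Implicit Arguments. Unset Strict Implicit. Unset Printing Implicit Defensive.
Import Order.TTheory GRing.Theory Num.Theory.
Local Open Scope ring_scope.

Definition morphism (r : nat) := 'I_r -> seq 'I_r.

Definition non_erasing r (s : morphism r) := forall i, (0 < size (s i))%N.

Definition uniform r (s : morphism r) (q : nat) := forall i, size (s i) = q.

Definition img_prefix r (s : morphism r) (x : nat -> 'I_r) (n : nat) : seq 'I_r :=
  flatten [seq s (x i) | i <- iota 0 n].

(* x is a fixed point of s : s(x) = x, i.e. for every n, the image of the
   length-n prefix of x is a prefix of x. *)
Definition is_fixed_point r (s : morphism r) (x : nat -> 'I_r) : Prop :=
  forall n, img_prefix s x n = [seq x i | i <- iota 0 (size (img_prefix s x n))].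

Definition incidence_matrix r (s : morphism r) : 'M[algC]_r :=
  \matrix_(i, j) (count_mem i (s j))%:R.

Definition length_vector r (s : morphism r) : 'rV[algC]_r :=
  \row_j (size (s j))%:R.

Definition is_spectral_radius n (A : 'M[algC]_n) (rho : algC) : Prop :=
  (exists a, eigenvalue A a /\ `|a| = rho) /\
  (forall a, eigenvalue A a -> `|a| <= rho).

Definition automatic (q : nat) r (x : nat -> 'I_r) : Prop :=
  (2 <= q)%N /\
  exists (k : nat) (tau : morphism k) (z : nat -> 'I_k) (f : 'I_k -> 'I_r),
    uniform tau q /\ is_fixed_point tau z /\ forall n, x n = f (z n).

(* Main.v *)
Require Import Defs.
From HB Require Import structures.
From mathcomp Require Import all_boot all_order all_algebra all_field all_character zify ring.
Set Implicit Arguments. Unset Strict Implicit. Unset Printing Implicit Defensive.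
Import Order.TTheory GRing.Theory Num.Theory.

Section Comb.
Variables (r : nat) (s : morphism r).
Definition sw (w : seq 'I_r) := flatten (map s w).

Arguments sw : simpl never.
Lemma sw_cat u v : sw (u ++ v) = sw u ++ sw v.
Proof. by rewrite /sw map_cat flatten_cat. Qed.
Lemma sw_cons a u : sw (a :: u) = s a ++ sw u. Proof. by []. Qed.

Variable N : nat.
Hypothesis hN : forall a, (size (s a) <= N)%N.
Variable d : 'I_r * 'I_N.+1.
Fixpoint lab (w : seq 'I_r) (p : nat) : 'I_r * 'I_N.+1 :=
  if w is a :: w' then
    (if (p < size (s a))%N then (a, inord p) else lab w' (p - size (s a)))
  else d.

Lemma lab_shift u v p : lab (u ++ v) (size (sw u) + p) = lab v p.
Proof.
elim: u => [|a u IH] //=. rewrite size_cat -addnA.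
rewrite ltnNge leq_addr /= addKn. exact: IH.
Qed.

Lemma lab_catl u v p : (p < size (sw u))%N -> lab (u ++ v) p = lab u p.
Proof.
elim: u p => [|a u IH] p //. rewrite sw_cons size_cat => hp /=.
case: ifP => // /negbT hlt. apply: IH. lia.
Qed.

Lemma lab_spec u p d0 : (p < size (sw u))%N -> exists i,
  [/\ (i < size u)%N, (lab u p).1 = nth d.1 u i,
      (size (sw (take i u)) + (lab u p).2 = p)%N,
      ((lab u p).2 < size (s (lab u p).1))%N &
      nth d0 (sw u) p = nth d0 (s (lab u p).1) (lab u p).2].
Proof.
elim: u p => [|a u IH] p //. rewrite sw_cons size_cat => hp /=.
case: ifP => hlt; last move/negbT: (hlt) => hlt'.
  exists 0%N. have hp' : (p < N.+1)%N by have := hN a; lia.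
  rewrite inordK //; split => //. by rewrite nth_cat hlt.
have [i [h1 h2 h3 h4 h5]] := IH (p - size (s a))%N ltac:(lia).
exists i.+1; split => //.
  have -> : take i.+1 (a :: u) = a :: take i u by [].
  rewrite sw_cons size_cat. lia.
by rewrite nth_cat (negbTE hlt') -h5.
Qed.
End Comb.

Section Auto.
Variables (r : nat) (s : morphism r) (q : nat) (x : nat -> 'I_r).
Hypothesis ne : non_erasing s.
Hypothesis hq : forall a, size (sw s (s a)) = (q * size (s a))%N.
Hypothesis fx : is_fixed_point s x.

Definition X n := [seq x i | i <- iota 0 n].

Lemma X_add a b : X (a + b) = X a ++ [seq x i | i <- iota a b].
Proof. by rewrite /X iotaD map_cat. Qed.

Lemma fixX n : sw s (X n) = X (size (sw s (X n))).
Proof. have := fx n. by rewrite /img_prefix /sw /X -map_comp. Qed.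

Lemma size_sw_ge w : (size w <= size (sw s w))%N.
Proof. elim: w => [|a w IH] //. rewrite sw_cons size_cat /=. have := ne a. lia. Qed.

Lemma nth_X d0 n m : (m < n)%N -> nth d0 (X n) m = x m.
Proof. move=> h. by rewrite /X (nth_map 0%N) ?size_iota // nth_iota. Qed.

Lemma size_X n : size (X n) = n. Proof. by rewrite size_map size_iota. Qed.

Lemma take_X i n : (i <= n)%N -> take i (X n) = X i.
Proof. move=> h. by rewrite /X -map_take take_iota (minn_idPl h). Qed.

Lemma sw2 w : size (sw s (sw s w)) = (q * size (sw s w))%N.
Proof.
elim: w => [|a w IH] /=; first by rewrite muln0.
by rewrite sw_cons sw_cat size_cat hq IH size_cat mulnDr.
Qed.

Definition N := \big[maxn/0%N]_(a < r) size (s a).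
Lemma hN a : (size (s a) <= N)%N.
Proof. by rewrite /N (bigD1 a) //= leq_maxl. Qed.
Definition dflt : 'I_r * 'I_N.+1 := (x 0%N, ord0).

Definition y m := lab s dflt (X m.+1) m.

Lemma yE n m : (m < size (sw s (X n)))%N -> y m = lab s dflt (X n) m.
Proof.
move=> h. rewrite /y.
have h1 : (m < size (sw s (X m.+1)))%N.
  have := size_sw_ge (X m.+1). rewrite size_X. lia.
case: (leqP n m.+1) => hn.
  by rewrite -(subnKC hn) X_add lab_catl.
by rewrite -(subnKC (ltnW hn)) X_add lab_catl.
Qed.

Lemma lab_spec_y m : exists i,
  [/\ (i <= m)%N, (y m).1 = x i,
      (size (sw s (X i)) + (y m).2 = m)%N,
      ((y m).2 < size (s (y m).1))%N &
      x m = nth (x m) (s (y m).1) (y m).2].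
Proof.
have h1 : (m < size (sw s (X m.+1)))%N.
  have := size_sw_ge (X m.+1). rewrite size_X. lia.
have [i [i1 i2 i3 i4 i5]] := lab_spec (hN) dflt (x m) h1.
rewrite size_X in i1.
exists i; split => //.
- by rewrite /y i2 nth_X.
- by rewrite /y; rewrite take_X ?(ltnW i1) in i3.
- by rewrite /y -i5 fixX nth_X // -fixX.
Qed.

Lemma keyK b p : (p < q * size (s (x b)))%N ->
  y (q * size (sw s (X b)) + p) = lab s dflt (s (x b)) p.
Proof.
move=> hp.
have e : X (size (sw s (X b.+1))) = sw s (X b) ++ s (x b).
  by rewrite -fixX -addn1 X_add sw_cat; congr (_ ++ _); rewrite /sw /= cats0.
rewrite (yE (n := size (sw s (X b.+1)))).
  by rewrite e -sw2 lab_shift.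
rewrite e sw_cat size_cat sw2 hq. lia.
Qed.

Definition P := ('I_r * 'I_N.+1)%type.
Definition z m : 'I_#|{: P}| := enum_rank (y m).
Definition tau : morphism #|{: P}| := fun c =>
  let: (a, k) := enum_val c in
  if (k < size (s a))%N then [seq enum_rank (lab s dflt (s a) p) | p <- iota (k * q) q]
  else nseq q c.
Definition fl (c : 'I_#|{: P}|) : 'I_r := let: (a, k) := enum_val c in nth a (s a) k.

Lemma tau_unif : uniform tau q.
Proof.
move=> c; rewrite /tau; case: (enum_val c) => a k.
by case: ifP => _; rewrite ?size_map ?size_iota ?size_nseq.
Qed.

Lemma tau_z n : tau (z n) = [seq z j | j <- iota (n * q) q].
Proof.
rewrite /tau /z enum_rankK.
have [i [i1 i2 i3 i4 _]] := lab_spec_y n.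
case E: (y n) i2 i3 i4 => [a k] /= i2 i3 i4.
rewrite i4 -[k * q]addn0 -[n * q]addn0 !iotaDl -!map_comp.
apply/eq_in_map => j; rewrite mem_iota => /andP [_ hj] /=.
rewrite -i3 i2 in i4 *.
congr enum_rank.
rewrite mulnDl [(size _ * q)%N]mulnC -addnA keyK //.
have : (k.+1 * q <= size (s (x i)) * q)%N by rewrite leq_mul2r i4 orbT.
rewrite mulSn. lia.
Qed.

Lemma tau_fix : is_fixed_point tau z.
Proof.
have key : forall n, img_prefix tau z n = [seq z i | i <- iota 0 (n * q)].
  elim=> [|n IH] //.
  rewrite /img_prefix -[n.+1]addn1 iotaD map_cat flatten_cat -/(img_prefix tau z n) IH /=.
  by rewrite cats0 add0n tau_z mulnDl mul1n iotaD map_cat.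
by move=> n; rewrite key size_map size_iota.
Qed.

Lemma x_fl n : x n = fl (z n).
Proof.
rewrite /fl /z enum_rankK.
have [i [_ _ _ _ i5]] := lab_spec_y n.
case E: (y n) i5 => [a k] /= ->. apply: set_nth_default.
have [_ [_ _ _ h _]] := lab_spec_y n. by rewrite E in h.
Qed.

Lemma q_ge2 : (1 < size (s (x 0%N)))%N -> (2 <= q)%N.
Proof.
move=> h.
set l := size (s (x 0%N)).
have e : sw s (X 1) = s (x 0%N) by rewrite /sw /= cats0.
have e1 : s (x 0%N) = X l by have := fixX 1; rewrite e.
have hl : l = (1 + (l - 1))%N by lia.
have := hq (x 0%N). rewrite {1}e1 hl X_add sw_cat size_cat e -/l.
have := size_sw_ge [seq x i | i <- iota 1 (l - 1)]. rewrite size_map size_iota.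
move: (l - 1)%N h hl => l' h hl h2.
case: q => [|[|q']] //= h3; lia.
Qed.

Lemma auto_main : (1 < size (s (x 0%N)))%N -> automatic q x.
Proof.
move=> h; split; first exact: q_ge2.
exists #|{: P}|, tau, z, fl; split; [exact: tau_unif | split; [exact: tau_fix | exact: x_fl]].
Qed.
End Auto.

Local Open Scope ring_scope.

Lemma exists_max (I : finType) (i0 : I) (f g : I -> algC) :
  (forall i, 0 <= f i) -> (forall i, 0 < g i) ->
  exists j, forall i, f i * g j <= f j * g i.
Proof.
move=> hf hg.
have tr i j e : f i * g j <= f j * g i -> f j * g e <= f e * g j ->
    f i * g e <= f e * g i.
  move=> h1 h2. rewrite -(ler_pM2r (hg j)).
  apply: (le_trans (y := f j * g i * g e)).
    have -> : f i * g e * g j = (f i * g j) * g e by ring.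
    by rewrite ler_pM2r.
  have -> : f j * g i * g e = (f j * g e) * g i by ring.
  have -> : f e * g i * g j = (f e * g j) * g i by ring.
  by rewrite ler_pM2r.
have tot i j : (f i * g j <= f j * g i) || (f j * g i <= f i * g j).
  apply: real_leVge; apply: ger0_real; apply: mulr_ge0 => //; exact: ltW.
suff [j hj] : exists j, forall i, i \in i0 :: enum I -> f i * g j <= f j * g i.
  by exists j => i; apply: hj; rewrite inE mem_enum orbT.
elim: (enum I) => [|e t [j hj]].
  by exists i0 => i; rewrite inE => /eqP ->.
have := tot j e; case/orP => hje.
- exists e => i; rewrite !inE => /orP [/eqP ->|/orP [/eqP ->|hi]].
  + apply: tr hje; apply: hj; exact: mem_head.
  + exact: lexx.
  + apply: tr hje; apply: hj; by rewrite inE hi orbT.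
- exists j => i; rewrite !inE => /orP [/eqP ->|/orP [/eqP ->|hi]].
  + apply: hj; exact: mem_head.
  + exact: hje.
  + apply: hj; by rewrite inE hi orbT.
Qed.

Lemma perron_bound n (M : 'M[algC]_n) (L : 'rV[algC]_n) (lam : algC) a :
  (forall i j, 0 <= M i j) -> (forall j, 0 < L 0 j) ->
  L *m M = lam *: L -> eigenvalue M a -> `|a| <= lam.
Proof.
move=> hM hL EL /eigenvalueP [v Ev nz].
have [i0 hi0] : exists i0, v 0 i0 != 0.
  case: (pickP (fun i => v 0 i != 0)) => [i hi|h]; first by exists i.
  case/eqP: nz; apply/rowP => i; rewrite mxE; apply/eqP.
  by have := h i => /negbFE.
have [j hj] := exists_max i0 (fun i => normr_ge0 (v 0 i)) hL.
have fjpos : 0 < `|v 0 j|.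
  rewrite -normr_gt0 in hi0.
  have := lt_le_trans (mulr_gt0 hi0 (hL j)) (hj i0).
  by rewrite pmulr_lgt0.
have e1 : `|a| * `|v 0 j| = `|\sum_i v 0 i * M i j|.
  have : (v *m M) 0 j = a * v 0 j by rewrite Ev mxE.
  by rewrite mxE => ->; rewrite normrM.
have e2 : `|\sum_i v 0 i * M i j| <= \sum_i `|v 0 i| * M i j.
  apply: le_trans (ler_norm_sum _ _ _) _.
  by apply: ler_sum => i _; rewrite normrM (ger0_norm (hM i j)).
have e4 : \sum_i L 0 i * M i j = lam * L 0 j.
  have : (L *m M) 0 j = (lam *: L) 0 j by rewrite EL.
  by rewrite !mxE.
have e3 : (\sum_i `|v 0 i| * M i j) * L 0 j <= `|v 0 j| * (lam * L 0 j).
  rewrite -e4 mulr_suml mulr_sumr; apply: ler_sum => i _.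
  have -> : `|v 0 i| * M i j * L 0 j = (`|v 0 i| * L 0 j) * M i j by ring.
  have -> : `|v 0 j| * (L 0 i * M i j) = (`|v 0 j| * L 0 i) * M i j by ring.
  by apply: ler_wpM2r.
rewrite -(ler_pM2r (mulr_gt0 fjpos (hL j))) mulrA e1.
apply: le_trans (ler_wpM2r (ltW (hL j)) e2) _.
apply: le_trans e3 _.
by rewrite le_eqVlt; apply/orP; left; apply/eqP; ring.
Qed.

Lemma size_sw_count r (s : morphism r) w :
  size (sw s w) = (\sum_(i < r) count_mem i w * size (s i))%N.
Proof.
elim: w => [|a w IH]; first by rewrite big1.
rewrite sw_cons size_cat IH /=.
have -> : (\sum_(i < r) count_mem i (a :: w) * size (s i) =
    \sum_(i < r) ((a == i) * size (s i) + count_mem i w * size (s i)))%N.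
  by apply: eq_bigr => i _; rewrite /= mulnDl.
rewrite big_split /=; congr (_ + _)%N.
rewrite (bigD1 a) //= eqxx mul1n big1 ?addn0 // => i /negbTE.
by rewrite eq_sym => ->.
Qed.

Theorem theorem1 (r : nat) (sigma : morphism r) (x : nat -> 'I_r) :
  (1 < r)%N ->
  non_erasing sigma ->
  is_fixed_point sigma x ->
  (1 < size (sigma (x 0%N)))%N ->
  (exists lambda : algC, lambda \is Num.real /\
     length_vector sigma *m incidence_matrix sigma = lambda *: length_vector sigma) ->
  exists q : nat,
    is_spectral_radius (incidence_matrix sigma) q%:R /\ automatic q x.
Proof.
move=> hr ne fx h1 [lam [lreal E]].
set M := incidence_matrix sigma. set L := length_vector sigma.
have hlam j : (size (sw sigma (sigma j)))%:R = lam * (size (sigma j))%:R.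
  have : (L *m M) 0 j = (lam *: L) 0 j by rewrite E.
  rewrite !mxE size_sw_count natr_sum => <-.
  by apply: eq_bigr => i _; rewrite !mxE natrM mulrC.
have hLpos j : 0 < L 0 j by rewrite mxE ltr0n ne.
have eigL : eigenvalue M lam.
  apply/eigenvalueP; exists L => //.
  apply/negP => /eqP hL0; have := hLpos (x 0%N); by rewrite hL0 mxE ltxx.
set j0 := x 0%N.
have hs0 : (size (sigma j0))%:R != 0 :> algC by rewrite pnatr_eq0 -lt0n ne.
have lamE : lam = (size (sw sigma (sigma j0)))%:R / (size (sigma j0))%:R.
  by rewrite hlam mulfK.
have lamrat : lam \in Crat by rewrite lamE rpred_div ?rpred_nat.
have lamA : lam \in Aint.
  apply: (root_monic_Aint (p := char_poly M)); first by rewrite -eigenvalue_root_char.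
    exact: char_poly_monic.
  pose Mz : 'M[int]_r := \matrix_(i, j) (count_mem i (sigma j))%:Z.
  have -> : M = map_mx intr Mz by apply/matrixP => i j; rewrite !mxE.
  rewrite -map_char_poly; apply/polyOverP => i; rewrite coef_map /=. exact: rpred_int.
have lamge0 : 0 <= lam by rewrite lamE divr_ge0 ?ler0n.
have : lam \is a Num.nat by rewrite natrEint lamge0 andbT Cint_rat_Aint.
case/natrP => q hq.
exists q.
have hq' a : size (sw sigma (sigma a)) = (q * size (sigma a))%N.
  by apply/eqP; rewrite -(eqr_nat algC) natrM -hq hlam.
split.
  split; first by exists q%:R; split; [rewrite -hq | exact: normr_nat].
  move=> a ha. rewrite -hq. apply: (perron_bound (L := L)) ha => //.
  by move=> i j; rewrite mxE ler0n.
exact: auto_main.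
Qed.
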